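(* Let $G$ be a digraph of directed tree-width at most $k$. Then there is a directed tree-decomposition $(T,\mathcal{X},\mathcal{W})$, $T=(V_T,E_T)$, of $G$ of width at most $k$ such that $|W_r|=1$ for every $r\in V_T$.
   Context: Digraphs are finite, without loops or multiple arcs. An out-tree is a digraph whose underlying graph is a tree, with a root such that all arcs are directed away from it; $u\le v$ means there is a directed path with $\ge0$ arcs from $u$ to $v$. For $Z\subseteq V$, a set $S\subseteq V$ is $Z$-normal if there is no directed walk in $G-Z$ with first and last vertices in $S$ that uses a vertex of $G-(Z\cup S)$. A directed tree-decomposition of $G=(V,E)$ is a triple $(T,\mathcal{X},\mathcal{W})$ with $T=(V_T,E_T)$ an out-tree, $\mathcal{X}=\{X_e:e\in E_T\}$ and $\mathcal{W}=\{W_r:r\in V_T\}$ subsets of $V$, such that $\mathcal{W}$ is a partition of $V$ into nonempty sets and for every $(u,v)\in E_T$ the set $\bigcup\{W_r: r\in V_T, v\le r\}$ is $X_{(u,v)}$-normal. Its width is $\max_{r\in V_T}|W_r\cup\bigcup_{e\sim r}X_e|-1$ ($e\sim r$: $r$ is an end vertex of $e$); the directed tree-width is the minimum width. *)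

(* Defs.v *)
From mathcomp Require Import all_boot.
Set Implicit Arguments. Unset Strict Implicit. Unset Printing Implicit Defensive.

(* A digraph: finite vertex type V with an arc relation E.  Loops are excluded
   by irreflexivity; multiple arcs are excluded by using a relation. *)
Definition digraph (V : finType) (E : rel V) : Prop := irreflexive E.

Definition uadj (T : finType) (E : rel T) : rel T := fun x y => E x y || E y x.

(* The underlying (multi)graph is a tree: connected and without cycles;
   a pair of antiparallel arcs counts as a cycle of length 2 in the
   underlying multigraph. *)
Definition underlying_tree (T : finType) (E : rel T) : Prop :=
  [/\ (forall x y : T, connect (uadj E) x y),
      (forall x y : T, E x y -> ~~ E y x) &
      (forall (x : T) (p : seq T),
          uniq (x :: p) -> 2 <= size p -> path (uadj E) x p ->
          ~~ uadj E (last x p) x)].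

Definition tle (T : finType) (E : rel T) (u v : T) : bool := connect E u v.

Definition out_tree (T : finType) (E : rel T) : Prop :=
  digraph E /\ underlying_tree E /\ exists r : T, forall v : T, tle E r v.

Definition normal (V : finType) (E : rel V) (Z S : {set V}) : Prop :=
  ~ exists (x : V) (p : seq V),
      [/\ path E x p,
          all (fun y => y \notin Z) (x :: p),
          x \in S, last x p \in S &
          has (fun y => y \notin Z :|: S) (x :: p)].

(* Directed tree-decomposition (T, X, W) of G = (V, E), with T = (VT, ET);
   X u v is the set X_e for the arc e = (u, v) of T (only meaningful on arcs). *)
Definition dtd (V : finType) (E : rel V) (VT : finType) (ET : rel VT)
    (X : VT -> VT -> {set V}) (W : VT -> {set V}) : Prop :=
  [/\ out_tree ET,
      (forall r : VT, W r != set0),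
      (forall r s : VT, r != s -> [disjoint W r & W s]),
      (forall x : V, exists r : VT, x \in W r) &
      (forall u v : VT, ET u v ->
         normal E (X u v) (\bigcup_(r | tle ET v r) W r))].

Definition bag (V : finType) (VT : finType) (ET : rel VT)
    (X : VT -> VT -> {set V}) (W : VT -> {set V}) (r : VT) : {set V} :=
  W r :|: (\bigcup_(u | ET u r) X u r) :|: (\bigcup_(w | ET r w) X r w).

Definition width (V : finType) (VT : finType) (ET : rel VT)
    (X : VT -> VT -> {set V}) (W : VT -> {set V}) : nat :=
  (\max_(r : VT) #|bag ET X W r|) - 1.

Definition dtw_le (V : finType) (E : rel V) (k : nat) : Prop :=
  exists (VT : finType) (ET : rel VT) (X : VT -> VT -> {set V})
         (W : VT -> {set V}), dtd E ET X W /\ width ET X W <= k.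

(* Main.v *)
Require Import Defs.
From mathcomp Require Import all_boot.
Set Implicit Arguments. Unset Strict Implicit. Unset Printing Implicit Defensive.

Definition arb (T : finType) (e : rel T) : Prop :=
  [/\ (forall a b, e a b -> ~~ connect e b a),
      (forall a b v, e a v -> e b v -> a = b) &
      exists r, forall v, connect e r v].

Lemma path_mem_connect (T : finType) (e : rel T) z p y :
  path e z p -> y \in z :: p -> connect e y (last z p).
Proof.
elim: p z => [|w p IH] z /=.
  by move=> _; rewrite inE => /eqP ->.
case/andP=> ezw pw; rewrite inE => /orP [/eqP ->|yin].
  apply: connect_trans (connect1 ezw) _. by apply: (path_connect pw); rewrite mem_last.
exact: IH.
Qed.

Lemma uadj_sym (T : finType) (e : rel T) : symmetric (uadj e).
Proof. by move=> x y; rewrite /uadj orbC. Qed.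

Lemma out_acyc (T : finType) (e : rel T) a b :
  out_tree e -> e a b -> ~~ connect e b a.
Proof.
move=> [irr [[_ asym cyc] _]] eab; apply/negP => /connectP [p pth aeq].
case/shortenP: pth aeq => p' pth' up' _ aeq; subst a.
case: p' pth' up' eab => [|y1 [|y2 p']].
- by move=> _ _ /= eab; rewrite irr in eab.
- by move=> /= /andP [eby1 _] _ eab; move: (asym _ _ eby1); rewrite eab.
- move=> pth' up' eab.
  have := cyc b [:: y1, y2 & p'] up' isT (sub_path (fun x y (h : e x y) => introT orP (or_introl h)) pth').
  by rewrite /= /uadj eab.
Qed.

Lemma merge (T : finType) (e : rel T) a b v :
  out_tree e -> a != b -> e a v -> e b v ->
  forall n z pa pb, size pa < n -> path e z pa -> path e z pb ->
  uniq (z :: pa) -> uniq (z :: pb) -> last z pa = a -> last z pb = b -> False.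
Proof.
move=> ot nab eav ebv n; elim: n => [//|n IH] z pa pb szn pa_p pb_p ua ub la lb.
case: (boolP (has (mem pb) pa)) => [/hasP [w wpa wpb] | /hasPn dis].
  case/splitPr: wpa szn pa_p ua la => pa1 pa2 szn pa_p ua la.
  case/splitPr: wpb pb_p ub lb => pb1 pb2 pb_p ub lb.
  apply: (IH w pa2 pb2).
  - by move: szn; rewrite size_cat /= => h; rewrite -ltnS; apply: leq_ltn_trans _ h; exact: leq_addl.
  - by move: pa_p; rewrite cat_path => /andP [_ /= /andP [_]].
  - by move: pb_p; rewrite cat_path => /andP [_ /= /andP [_]].
  - by move: ua; rewrite -cat_cons cat_uniq => /and3P [_ _].
  - by move: ub; rewrite -cat_cons cat_uniq => /and3P [_ _].
  - by rewrite -la last_cat.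
  - by rewrite -lb last_cat.
have acyc := out_acyc ot.
have vna : v \notin z :: pa.
  apply/negP => /(path_mem_connect pa_p); rewrite la => c.
  by move: (acyc _ _ eav); rewrite c.
have vnb : v \notin z :: pb.
  apply/negP => /(path_mem_connect pb_p); rewrite lb => c.
  by move: (acyc _ _ ebv); rewrite c.
have [_ [[_ _ cyc] _]] := ot.
have sube : subrel e (uadj e) by move=> x y h; rewrite /uadj h.
have pbv : path (uadj e) v (rcons (rev pb) z).
  have h1 : path e z (rcons pb v) by rewrite rcons_path pb_p lb ebv.
  have h2 : path (fun x y => uadj e y x) z (rcons pb v).
    by apply: sub_path h1 => x y h; rewrite /uadj h orbT.
  by move: h2; rewrite -rev_path belast_rcons last_rcons rev_cons.
move: pbv; rewrite rcons_path => /andP [pbv cl].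
apply: (negP (cyc z (pa ++ v :: rev pb) _ _ _)).
- move: ua ub vna vnb; rewrite /= !inE !negb_or.
  move=> /andP [zpa upa] /andP [zpb upb] /andP [zv vpa] /andP [_ vpb].
  rewrite mem_cat negb_or zpa /= inE negb_or eq_sym zv mem_rev zpb /=.
  rewrite cat_uniq upa /= rev_uniq upb mem_rev vpb /= andbT.
  rewrite negb_or vpa /=; apply/hasPn => y; rewrite mem_rev => ypb.
  by apply/negP => ypa; move: (dis _ ypa); rewrite /= ypb.
- rewrite size_cat /= size_rev.
  case: pa la {pa_p ua vna dis szn} => [|y pa] la; last by rewrite /= addSn addnS.
  case: pb lb {pb_p ub vnb pbv cl} => [|y pb] lb; last by [].
  by move: nab; rewrite /= -la -lb eqxx.
- rewrite cat_path (sub_path sube pa_p) /= la /uadj eav /=; done.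
- by rewrite last_cat.
Qed.

Lemma out_arb (T : finType) (e : rel T) : out_tree e -> arb e.
Proof.
move=> ot; split.
- by move=> a b; apply: out_acyc.
- move=> a b v eav ebv; apply/eqP; apply/negPn/negP => nab.
  have [_ [_ [r rr]]] := ot.
  have /connectP [pa pa_p la] := rr a.
  have /connectP [pb pb_p lb] := rr b.
  case/shortenP: pa_p la => pa' pa_p ua _ la.
  case/shortenP: pb_p lb => pb' pb_p ub _ lb.
  exact: (merge ot nab eav ebv (ltnSn (size pa')) pa_p pb_p ua ub (esym la) (esym lb)).
- by have [_ [_ rr]] := ot.
Qed.

Lemma arb_out (T : finType) (e : rel T) : arb e -> out_tree e.
Proof.
move=> [acyc indeg [r rr]].
have irr : irreflexive e by move=> x; apply/negP => exx; move: (acyc _ _ exx); rewrite connect0.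
have sube : subrel e (uadj e) by move=> x y h; rewrite /uadj h.
split=> //; split; last by exists r.
split.
- move=> x y.
  have cs : connect_sym (uadj e) by apply: sym_connect_sym; exact: uadj_sym.
  have hx : connect (uadj e) r x by apply: connect_sub (rr x) => a b h; apply: connect1; exact: sube.
  have hy : connect (uadj e) r y by apply: connect_sub (rr y) => a b h; apply: connect1; exact: sube.
  by apply: connect_trans hy; rewrite cs.
- by move=> x y exy; apply/negP => eyx; move: (acyc _ _ exy); rewrite connect1.
set h := fun v => #|[set u | connect e u v]|.
have hlt : forall a b, e a b -> h a < h b.
  move=> a b eab; apply: proper_card; apply/properP; split.
    apply/subsetP => u; rewrite !inE => ua; exact: connect_trans ua (connect1 eab).
  by exists b; rewrite !inE ?connect0 // (negbTE (acyc _ _ eab)).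
move=> x p up szp pp; apply/negP => cl.
have cyc : cycle (uadj e) (x :: p) by rewrite /= rcons_path pp cl.
have [v' vin vmax] : exists2 v', v' \in x :: p & forall w, w \in x :: p -> h w <= h v'.
  case: (@arg_maxnP _ x (fun i => i \in x :: p) h (mem_head x p)).
  by move=> i iin imax; exists i.
case/rot_to: vin cyc up szp => i q rq cyc up szp.
rewrite -(rot_cycle i) rq in cyc.
rewrite -(rot_uniq i) rq in up.
have szq : size q = size p by move: (size_rot i (x :: p)); rewrite rq /= => [[]].
have memq : forall w, w \in q -> w \in x :: p by move=> w wq; rewrite -(mem_rot i) rq inE wq orbT.
case: q rq cyc up szq memq => [|a [|y q']] //=; first by move=> _ _ _ szq; rewrite -szq in szp.
  by move=> _ _ _ szq; rewrite -szq in szp.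
move=> _ /andP [uva pth] up _ memq.
move: pth; rewrite rcons_path => /and3P [_ _ ubv].
set b := last y q' in ubv.
have ha := vmax a (memq a (mem_head _ _)).
have hb : h b <= h v' by apply: vmax; apply: memq; rewrite inE mem_last orbT.
have eav : e a v'.
  case/orP: uva => [evA|//]; by move: (hlt _ _ evA); rewrite ltnNge ha.
have ebv : e b v'.
  case/orP: ubv => [//|evB]; by move: (hlt _ _ evB); rewrite ltnNge hb.
have abeq := indeg _ _ _ eav ebv.
move: up => /and4P [_ anin _ _].
by rewrite abeq /b mem_last in anin.
Qed.

Theorem lemma4p8 (V : finType) (E : rel V) (k : nat) :
  digraph E -> dtw_le E k ->
  exists (VT : finType) (ET : rel VT) (X : VT -> VT -> {set V})
         (W : VT -> {set V}),
    [/\ dtd E ET X W, width ET X W <= k & forall r : VT, #|W r| = 1].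
Proof.
move=> _ [VT [ET [X [W [[ot Wne Wdis Wcov Wnorm] wk]]]]].
have [acyc indeg [rt rr]] := out_arb ot.
have [f fW] : exists f : V -> VT, forall x, x \in W (f x) := @fin_all_exists V (fun _ => VT) (fun x r => x \in W r) Wcov.
have [c cW] : exists c : VT -> V, forall r, c r \in W r.
  apply: (@fin_all_exists VT (fun _ => V) (fun r x => x \in W r)) => r; case/set0Pn: (Wne r) => x xin; by exists x.
have fE : forall x r, x \in W r -> f x = r.
  move=> x r xr; apply/eqP; apply/negPn/negP => ne.
  by move: (disjointFr (Wdis _ _ ne) (fW x)); rewrite xr.
have fc : forall r, f (c r) = r by move=> r; apply: fE.
pose ET' : rel V := fun x y => (x == c (f x)) &&
   (((f y == f x) && (y != x)) || ((y == c (f y)) && ET (f x) (f y))).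
pose X' : V -> V -> {set V} := fun x y => if y == c (f y) then X (f x) (f y) else [set y].
pose W' : V -> {set V} := fun x => [set x].
have hA : forall x y, ET' x y -> connect ET (f x) (f y).
  move=> x y /andP [_ /orP [/andP [/eqP -> _]|/andP [_ e]]]; first exact: connect0.
  exact: connect1.
have hB : forall x y, connect ET' x y -> connect ET (f x) (f y).
  move=> x y /connectP [p pth ->]; elim: p x pth => [|w p IH] x /=; first by move=> _; exact: connect0.
  by case/andP=> exw pw; apply: connect_trans (hA _ _ exw) (IH _ pw).
have hC : forall y z, y != c (f y) -> connect ET' y z -> z = y.
  move=> y z ny /connectP [[|w p] /= pth ->] //.
  by move: pth; rewrite /ET' (negbTE ny).
have hD : forall u v, ET' u v -> v = c (f v) -> ET (f u) (f v).
  move=> u v /andP [/eqP uc /orP [/andP [/eqP fvu vu]|/andP [_ e]]] vc //.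
  by move: vu; rewrite vc fvu -uc eqxx.
have hE : forall r s, connect ET r s -> forall z, f z = s -> connect ET' (c r) z.
  move=> r s /connectP [p pth ->] z fz.
  have cc : connect ET' (c r) (c (last r p)).
    elim: p r pth {fz} => [|w p IH] r /=; first by move=> _; exact: connect0.
    case/andP=> erw pw; apply: connect_trans (IH _ pw); apply: connect1.
    by rewrite /ET' !fc !eqxx erw orbT.
  apply: connect_trans cc _; case: (boolP (z == c (last r p))) => [/eqP ->|nz]; first exact: connect0.
  by apply: connect1; rewrite /ET' !fc eqxx fz eqxx nz.
have hF : forall v, v = c (f v) ->
    \bigcup_(r | tle ET' v r) W' r = \bigcup_(s | tle ET (f v) s) W s.
  move=> v vc; apply/setP => z; apply/bigcupP/bigcupP.
    move=> [r vr]; rewrite inE => /eqP ->; exists (f r) => //; exact: hB.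
  move=> [s vs zs]; exists z; last by rewrite inE.
  rewrite /tle [X in connect _ X]vc; exact: (hE (f v) s vs z (fE _ _ zs)).
exists V, ET', X', W'; split; last by move=> r; rewrite cards1.
- split.
  + apply: arb_out; split.
    * move=> a b eab; case: (boolP (b == c (f b))) => [/eqP bc|nb].
        apply/negP => /hB cba; move: (acyc _ _ (hD _ _ eab bc)); by rewrite cba.
      apply/negP => /(hC _ _ nb) ab; move: eab; rewrite ab /ET' (negbTE nb) //.
    * move=> a b v eav ebv; case: (boolP (v == c (f v))) => [/eqP vc|nv].
        have := indeg _ _ _ (hD _ _ eav vc) (hD _ _ ebv vc).
        move=> fab; move: eav ebv => /andP [/eqP ac _] /andP [/eqP bc _].
        by rewrite ac bc fab.
      move: eav ebv; rewrite /ET' (negbTE nv) /= !orbF.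
      move=> /andP [/eqP ac /andP [/eqP fva _]] /andP [/eqP bc /andP [/eqP fvb _]].
      by rewrite ac bc -fva -fvb.
    * exists (c rt) => z; exact: (hE _ _ (rr (f z))).
  + by move=> r; apply/set0Pn; exists r; rewrite inE.
  + by move=> r s rs; rewrite disjoints1 inE.
  + by move=> x; exists x; rewrite inE.
  + move=> u v euv; case: (boolP (v == c (f v))) => [/eqP vc|nv].
      rewrite /X' -vc eqxx hF //; exact: Wnorm (hD _ _ euv vc).
    rewrite /X' (negbTE nv) => [[x [p [_ /andP [xZ _] xS _ _]]]].
    case/bigcupP: xS => r /(hC _ _ nv) ->; rewrite inE => xv.
    by move: xZ; rewrite inE xv.
- rewrite /width; apply: leq_trans _ wk; apply: leq_sub2r.
  apply/bigmax_leqP => x _; apply: (@leq_trans #|bag ET X W (f x)|); last exact: leq_bigmax.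
  apply: subset_leq_card; apply/subsetP => z.
  rewrite /bag => /setUP [/setUP [zW|zin]|zout].
  + by apply/setUP; left; apply/setUP; left; move: zW; rewrite inE => /eqP ->.
  + case/bigcupP: zin => u eux; rewrite /X'.
    case: (boolP (x == c (f x))) => [/eqP xc|nx] zX.
      apply/setUP; left; apply/setUP; right; apply/bigcupP; exists (f u) => //.
      exact: hD eux xc.
    by apply/setUP; left; apply/setUP; left; move: zX; rewrite inE => /eqP ->.
  + case/bigcupP: zout => w exw; rewrite /X'.
    case: (boolP (w == c (f w))) => [/eqP wc|nw] zX.
      apply/setUP; right; apply/bigcupP; exists (f w) => //.
      exact: hD exw wc.
    move: exw; rewrite /ET' (negbTE nw) /= orbF => /andP [_ /andP [/eqP fw _]].
    by apply/setUP; left; apply/setUP; left; move: zX; rewrite inE => /eqP ->; rewrite -fw.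
Qed.
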